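(* Let $V\subseteq\gamma_D$ be finite with $|V|\ge D+1$, let $T$ be a triangulation of $\mathrm{conv}(V)$ all of whose vertices lie in $V$, and let $\sigma\subseteq V$ be a $k$-simplex with $\lceil D/2\rceil\le k\le D$. If $T$ contains the $\lceil D/2\rceil$-dimensional skeleton of $\sigma$ (all faces of $\sigma$ of dimension at most $\lceil D/2\rceil$), then $\sigma\in T$.
   Context: $\gamma_D=\{(t,t^2,\dots,t^D):t\in\mathbb{R}\}$ is the moment curve in $\mathbb{R}^D$. A $k$-simplex on $\gamma_D$ is $\mathrm{conv}(\sigma)$ for $\sigma\subseteq\gamma_D$ with $|\sigma|=k+1$. A triangulation of a polytope is a geometric simplicial complex whose union is the polytope. *)

(* Defs.v *)
From HB Require Import structures.
From mathcomp Require Import all_boot all_order all_algebra.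
From mathcomp Require Import finmap.
From mathcomp Require Import reals.
Unset Printing Implicit Defensive.
Import Order.TTheory GRing.Theory Num.Theory.
Local Open Scope ring_scope.
Local Open Scope fset_scope.

Definition moment (R : realType) (D : nat) (t : R) : 'rV[R]_D :=
  \row_(i < D) t ^+ i.+1.

Definition conv (R : realType) (D : nat) (S : {fset R}) (x : 'rV[R]_D) : Prop :=
  exists lam : R -> R,
    [/\ forall t, t \in S -> 0 <= lam t,
        \sum_(t <- S) lam t = 1
      & x = \sum_(t <- S) lam t *: @moment R D t].

(* T (a finite family of vertex sets, identified by their moment-curve
   parameters) is a triangulation of conv(V) all of whose vertices lie in V:
   a geometric simplicial complex (every member is a simplex, i.e. at most
   D+1 points of gamma_D, which are automatically affinely independent;
   closed under taking nonempty faces; any two simplices meet in a common face)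
   whose union is conv(V). *)
Definition triangulation (R : realType) (D : nat) (V : {fset R})
    (T : {fset {fset R}}) : Prop :=
  [/\ forall s, s \in T -> s `<=` V,
      forall s, s \in T -> (0 < #|` s | <= D.+1)%N,
      forall s u, s \in T -> u `<=` s -> (0 < #|` u |)%N -> u \in T,
      forall s t, s \in T -> t \in T ->
        exists u : {fset R}, [/\ u `<=` s, u `<=` t &
          forall x, (@conv R D s x /\ @conv R D t x) <-> @conv R D u x]
    & forall x, @conv R D V x <-> exists2 s, s \in T & @conv R D s x].

(* Main.v *)
Require Import Defs.
From HB Require Import structures.
From mathcomp Require Import all_boot all_order all_algebra.
From mathcomp Require Import finmap.
From mathcomp Require Import reals.
Local Open Scope ring_scope.
Local Open Scope fset_scope.
From mathcomp Require Import ring lra.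
Import Order.TTheory GRing.Theory Num.Theory.

Section Aux.
Set Implicit Arguments. Unset Strict Implicit.
Local Open Scope fset_scope.
Local Open Scope ring_scope.
Variable R : realType.
Variable D : nat.

Definition dep (W : seq R) (c : R -> R) :=
  forall j, (j <= D)%N -> \sum_(t <- W) c t * t ^+ j = 0.

Lemma dep_poly W c : dep W c -> forall f : {poly R}, (size f <= D.+1)%N ->
  \sum_(t <- W) c t * f.[t] = 0.
Proof.
move=> dW f sf.
under eq_bigr => t _ do rewrite horner_coef mulr_sumr.
rewrite exchange_big /= big1 // => i _.
under eq_bigr => t _ do rewrite mulrCA.
rewrite -mulr_sumr dW ?mulr0 //.
by rewrite -ltnS; apply: leq_trans (ltn_ord i) sf.
Qed.

Lemma indep W c : uniq W -> (size W <= D.+1)%N -> dep W c ->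
  forall t, t \in W -> c t = 0.
Proof.
move=> uW sW dW t tW.
pose f := \prod_(w <- rem t W) ('X - w%:P).
have sf : (size f <= D.+1)%N.
  rewrite size_prod_XsubC size_rem // prednK //.
  by case: (W) tW.
have := dep_poly dW sf.
rewrite (bigD1_seq t) //= big1_seq; last first.
  move=> w /andP[wt wW]; rewrite /f horner_prod.
  apply/eqP; rewrite mulf_eq0 prodf_seq_eq0; apply/orP; right.
  apply/hasP; exists w; first by rewrite (mem_rem_uniq _ uW) inE wt.
  by rewrite hornerXsubC subrr eqxx.
rewrite addr0 => /eqP; rewrite mulf_eq0 => /orP[/eqP //|].
rewrite /f horner_prod prodf_seq_eq0 => /hasP[w wr].
rewrite hornerXsubC subr_eq0 => /eqP tw.
by move: wr; rewrite -tw (mem_rem_uniqF t uW).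
Qed.

Fixpoint alt (c : R -> R) (e : bool) (xs : seq R) : bool :=
  if xs is x :: xs' then (if e then 0 < c x else c x < 0) && alt c (~~ e) xs'
  else true.

Lemma claim c ts : sorted <%R ts -> forall L e p p2, (0 < L)%N -> p <= p2 ->
  all (fun y => p2 < y) ts ->
  (exists xs, [/\ subseq xs ts, size xs = L & alt c e xs]) \/
  exists f : {poly R}, [/\ (size f <= L)%N,
     (forall t, t \in ts -> c t != 0 -> 0 < c t * f.[t]) &
     forall x, p <= x <= p2 -> if e then f.[x] < 0 else 0 < f.[x]].
Proof.
elim: ts => [|t rest IH] srt L e p p2 L0 pp2 allts.
  right; exists ((if e then -1 else 1)%:P); split => //.
  - by rewrite size_polyC; case: (_ != 0) => //.
  - by move=> x _; rewrite hornerC; case: e => //; rewrite ?ltrN10 ?ltr01.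
have srest : sorted <%R rest by apply: path_sorted srt.
have allrest : all (fun y => t < y) rest.
  by move: srt => /=; rewrite (path_sortedE lt_trans) => /andP[].
move: allts => /= /andP[p2t _].
have allrest2 : all (fun y => p2 < y) rest.
  by apply/allP => y /(allP allrest) ty; apply: lt_trans ty.
have lift : forall xs, subseq xs rest -> subseq xs (t :: rest).
  by move=> xs /subseq_trans; apply; apply: subseq_cons.
have [ct0|ctn0] := eqVneq (c t) 0.
  case: (IH srest L e p p2 L0 pp2 allrest2) => [[xs [h1 h2 h3]]|[f [h1 h2 h3]]].
    by left; exists xs; split => //; apply: lift.
  right; exists f; split => // y; rewrite inE => /orP[/eqP ->|]; first by rewrite ct0 eqxx.
  exact: h2.
have [sgopp|sgsame] := boolP (if e then c t < 0 else 0 < c t).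
  have pt : p <= t by apply: le_trans pp2 (ltW p2t).
  case: (IH srest L e p t L0 pt allrest) => [[xs [h1 h2 h3]]|[f [h1 h2 h3]]].
    by left; exists xs; split => //; apply: lift.
  right; exists f; split => //.
    move=> y; rewrite inE => /orP[/eqP -> _|]; last exact: h2.
    have := h3 t; rewrite pt lexx /= => {}h3.
    by case: e sgopp h3 => ? ?; nra.
  move=> x /andP[px xp2]; apply: h3; rewrite px /=; apply: le_trans xp2 (ltW p2t).
have sge : if e then 0 < c t else c t < 0.
  case: e sgsame => /= H.
    by rewrite lt_def ctn0 /= leNgt H.
  by rewrite lt_def eq_sym ctn0 /= leNgt H.
case: L L0 => // [[|L']] _.
  by left; exists [:: t]; split => /=; rewrite ?eqxx ?sub0seq ?sge.
have pt : p <= t by apply: le_trans pp2 (ltW p2t).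
case: (IH srest L'.+1 (~~ e) p t isT pt allrest) => [[xs [h1 h2 h3]]|[g [h1 h2 h3]]].
  by left; exists (t :: xs); split => /=; [rewrite eqxx | rewrite h2 | rewrite sge].
right; pose q := (p2 + t) / 2.
exists (g * ('X - q%:P)); split.
- apply: leq_trans (size_mul_leq _ _) _; rewrite size_XsubC addn2 /=; exact: h1.
- move=> y; rewrite hornerM hornerXsubC inE => /orP[/eqP ->|yr] cy.
    have := h3 t; rewrite pt lexx /= => {}h3.
    have tq : 0 < t - q by rewrite /q; lra.
    rewrite mulrA; apply: mulr_gt0 => //; clear sgsame; case: e sge h3 => /= ? ?; nra.
  have := h2 y yr cy; have := allP allrest y yr => ty.
  have yq : 0 < y - q by rewrite /q; lra.
  by nra.
- move=> x /andP[px xp2]; rewrite hornerM hornerXsubC.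
  have := h3 x; rewrite px /= (le_trans xp2 (ltW p2t)) => /(_ isT) {}h3.
  have xq : x - q < 0 by rewrite /q; lra.
  by clear sgsame; case: e sge h3 => /= ? ?; nra.
Qed.

Lemma lemM c ts : sorted <%R ts -> has (fun t => c t != 0) ts -> forall L, (0 < L)%N ->
  (exists e xs, [/\ subseq xs ts, size xs = L & alt c e xs]) \/
  exists f : {poly R}, [/\ (size f <= L.-1)%N &
     (forall t, t \in ts -> c t != 0 -> 0 < c t * f.[t])].
Proof.
elim: ts => [|t rest IH] //= srt hs L L0.
have srest : sorted <%R rest by apply: path_sorted srt.
have allrest : all (fun y => t < y) rest.
  by move: srt => /=; rewrite (path_sortedE lt_trans) => /andP[].
have lift : forall xs, subseq xs rest -> subseq xs (t :: rest).
  by move=> xs /subseq_trans; apply; apply: subseq_cons.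
have [ct0|ctn0] := eqVneq (c t) 0.
  move: hs; rewrite ct0 eqxx /= => hs.
  case: (IH srest hs L L0) => [[e [xs [h1 h2 h3]]]|[f [h1 h2]]].
    by left; exists e, xs; split => //; apply: lift.
  right; exists f; split => // y; rewrite inE => /orP[/eqP ->|]; first by rewrite ct0 eqxx.
  exact: h2.
pose e0 := 0 < c t.
have sge : if e0 then 0 < c t else c t < 0.
  rewrite /e0; case: ifP => // H.
  by rewrite lt_def eq_sym ctn0 /= leNgt H.
case: L L0 => // [[|L']] _.
  by left; exists e0, [:: t]; split => /=; rewrite ?eqxx ?sub0seq ?sge.
case: (claim c srest (L := L'.+1) (~~ e0) (p := t) (p2 := t) isT (lexx t) allrest)
  => [[xs [h1 h2 h3]]|[g [h1 h2 h3]]].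
  by left; exists e0, (t :: xs); split => /=; rewrite ?eqxx ?h2 ?sge.
right; exists g; split => // y; rewrite inE => /orP[/eqP ->|yr] cy; last exact: h2.
have := h3 t; rewrite lexx /= => {}h3.
by case: e0 sge h3 => /= ? ?; nra.
Qed.

Lemma main_alt c ts : sorted <%R ts -> dep ts c -> has (fun t => c t != 0) ts ->
  exists e xs, [/\ subseq xs ts, size xs = D.+2 & alt c e xs].
Proof.
move=> srt dt hs.
case: (lemM srt hs (L := D.+2) isT) => // [[f [sf hf]]].
exfalso; have := dep_poly dt sf; apply/eqP.
rewrite big_seq_cond psumr_neq0.
  apply/hasP; move: hs => /hasP[t tt ct]; exists t => //.
  by rewrite tt /=; apply: hf.
move=> y /andP[yt _]; have [->|cy] := eqVneq (c y) 0; first by rewrite mul0r.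
exact/ltW/hf.
Qed.

Lemma alt_nz c e xs x : alt c e xs -> x \in xs -> c x != 0.
Proof.
elim: xs e => [|y xs IH] e //= /andP[hy ha]; rewrite inE => /orP[/eqP ->|]; last exact: IH ha.
by clear ha; case: e hy => H; [rewrite gt_eqF | rewrite lt_eqF].
Qed.

Lemma alt_prod c d e1 e2 xs : alt c e1 xs -> alt d e2 xs ->
  forall x, x \in xs -> if e1 == e2 then 0 < c x * d x else c x * d x < 0.
Proof.
elim: xs e1 e2 => [|y xs IH] e1 e2 //= /andP[h1 a1] /andP[h2 a2] x.
rewrite inE => /orP[/eqP ->|xx].
  by clear a1 a2; case: e1 e2 h1 h2 => [] [] /= ? ?; nra.
by have := IH _ _ a1 a2 x xx; case: e1 e2 {h1 h2 a1 a2} => [] [].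
Qed.

Lemma alt_count c e xs : alt c e xs ->
  (count (fun x => (0 < c x)%R) xs <= if e then uphalf (size xs) else (size xs)./2)%N.
Proof.
elim: xs e => [|y xs IH] e /=; first by case: e.
move=> /andP[h a]; have := IH _ a; clear a; case: e h => /= h.
  by rewrite h add1n.
by rewrite (lt_gtF h) add0n.
Qed.

Lemma alt_has c e xs : alt c e xs -> (1 < size xs)%N ->
  has (fun x => 0 < c x) xs /\ has (fun x => c x < 0) xs.
Proof.
case: xs => [|x [|y xs]] //= /andP[hx /andP[hy _]] _.
by case: e hx hy => /= hx hy; rewrite ?hx ?hy ?orbT.
Qed.

Lemma kern xs : uniq xs -> size xs = D.+2 ->
  exists d : R -> R, dep xs d /\ has (fun t => d t != 0) xs.
Proof.
move=> uxs sxs.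
pose A : 'M[R]_(D.+2, D.+1) := \matrix_(i, j) (nth 0 xs i) ^+ j.
have : kermx A != 0.
  rewrite -mxrank_eq0 mxrank_ker subn_eq0 -ltnNge.
  exact: leq_ltn_trans (rank_leq_col A) _.
move=> /eqP K0.
have [i Ri] : exists i, row i (kermx A) != 0.
  apply/existsP; apply: contra_notT K0 => /existsPn H.
  by apply/row_matrixP => i; rewrite row0; apply/eqP; rewrite -[_ == _]negbK H.
pose d := row i (kermx A).
have dA : d *m A = 0 by rewrite /d -row_mul mulmx_ker row0.
exists (fun t => d 0 (inord (index t xs))).
have nthE : forall k : 'I_D.+2, d 0 (inord (index (nth 0 xs k) xs)) = d 0 k.
  move=> k; rewrite index_uniq ?sxs // inord_val //.
split.
  move=> j jD; rewrite (big_nth 0) sxs big_mkord.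
  have := congr1 (fun M : 'M[R]_(1, D.+1) => M 0 (@Ordinal D.+1 j jD)) dA.
  rewrite !mxE => H; rewrite -[in RHS]H; apply: eq_bigr => k _; rewrite nthE !mxE //.
case: (boolP (has (fun t => d 0 (inord (index t xs)) != 0) xs)) => // /hasPn Hn; exfalso; move/eqP: Ri; apply; apply/rowP => k.
have := Hn (nth 0 xs k); rewrite mem_nth ?sxs // nthE mxE negbK => /(_ isT) /eqP ->.
by rewrite mxE.
Qed.

Definition extf (A : {fset R}) (f : R -> R) t := if t \in A then f t else 0.

Lemma ext_sum (A C : {fset R}) f g : A `<=` C ->
  \sum_(t <- C) extf A f t * g t = \sum_(t <- A) f t * g t.
Proof.
move=> hAC; rewrite -(big_fset_incl _ hAC); last by move=> x _ xA; rewrite /extf (negbTE xA) mul0r.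
by apply: eq_fbigr => x xA _; rewrite /extf xA.
Qed.

Lemma momE (A : seq R) (la : R -> R) (i : 'I_D) :
  (\sum_(t <- A) la t *: moment R D t) 0 i = \sum_(t <- A) la t * t ^+ i.+1.
Proof. by rewrite summxE; apply: eq_bigr => t _; rewrite !mxE. Qed.

Lemma conv_sub (A C : {fset R}) x : A `<=` C -> conv R D A x -> conv R D C x.
Proof.
move=> hAC [la [h1 h2 h3]]; exists (extf A la); split.
- by move=> t _; rewrite /extf; case: ifP => // tA; apply: h1.
- rewrite -[RHS]h2 -(big_fset_incl _ hAC); last by move=> y _ yA; rewrite /extf (negbTE yA).
  by apply: eq_fbigr => y yA _; rewrite /extf yA.
- rewrite h3 -(big_fset_incl _ hAC); last by move=> y _ yA; rewrite /extf (negbTE yA) scale0r.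
  by apply: eq_fbigr => y yA _; rewrite /extf yA.
Qed.

Lemma conv_dep (A B : {fset R}) la lb :
  \sum_(t <- A) la t = 1 -> \sum_(t <- B) lb t = 1 ->
  \sum_(t <- A) la t *: moment R D t = \sum_(t <- B) lb t *: moment R D t ->
  dep (A `|` B) (fun t => extf A la t - extf B lb t).
Proof.
move=> sa sb eqx j jD.
under eq_bigr => t _ do rewrite mulrBl.
rewrite sumrB ext_sum ?fsubsetUl // ext_sum ?fsubsetUr //.
case: j jD => [|i] iD.
  by under eq_bigr => t _ do rewrite expr0 mulr1; under [X in _ - X]eq_bigr => t _ do rewrite expr0 mulr1; rewrite sa sb subrr.
have := congr1 (fun M : 'rV[R]_D => M 0 (@Ordinal D i iD)) eqx => /=.
by rewrite !momE => ->; rewrite subrr.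
Qed.

Lemma split_sum (xs : seq R) (c F : R -> R) : (forall x, x \in xs -> c x != 0) ->
  \sum_(t <- xs) F t = \sum_(t <- [seq x <- xs | 0 < c x]) F t +
                       \sum_(t <- [seq x <- xs | c x < 0]) F t.
Proof.
move=> H; rewrite !big_filter (bigID (fun x => 0 < c x)) /=; congr (_ + _).
rewrite big_seq_cond [RHS]big_seq_cond; apply: eq_bigl => x.
case xin: (x \in xs) => //=; have := H x xin => cx.
by rewrite [RHS]ltNge le_eqVlt eq_sym (negbTE cx).
Qed.

Lemma sum_seq_fset (s : seq R) (F : R -> R) : uniq s ->
  \sum_(t <- seq_fset tt s) F t = \sum_(t <- s) F t.
Proof. by move=> us; rewrite (perm_big _ (seq_fset_perm _ _)) undup_id. Qed.

Lemma sum_seq_fsetM (s : seq R) (F : R -> 'rV[R]_D) : uniq s ->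
  \sum_(t <- seq_fset tt s) F t = \sum_(t <- s) F t.
Proof. by move=> us; rewrite (perm_big _ (seq_fset_perm _ _)) undup_id. Qed.
End Aux.

Unset Implicit Arguments. Set Strict Implicit.
Local Open Scope ring_scope.
Local Open Scope fset_scope.

Theorem proposition3p3 (R : realType) (D : nat) (V : {fset R})
    (T : {fset {fset R}}) (sigma : {fset R}) (k : nat) :
  (D.+1 <= #|` V |)%N ->
  @triangulation R D V T ->
  sigma `<=` V ->
  #|` sigma | = k.+1 ->
  (uphalf D <= k <= D)%N ->
  (forall tau : {fset R}, tau `<=` sigma -> (0 < #|` tau |)%N ->
     (#|` tau | <= (uphalf D).+1)%N -> tau \in T) ->
  sigma \in T.
Proof.
move=> _ [hsub hcard hface hint hcov] hsV hk _ hskel.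
pose beta := fun _ : R => ((k.+1)%:R : R)^-1.
pose b := \sum_(t <- sigma) beta t *: moment R D t.
have sumbeta : (\sum_(t <- sigma) beta t = 1)%R.
  rewrite /beta big_const_seq count_predT iter_addr_0 hk -[_^-1 *+ _]mulr_natr mulVf //.
  by rewrite pnatr_eq0.
have convb : conv R D sigma b.
  exists beta; split => // t _; rewrite /beta invr_ge0 ler0n //.
have [s sT [mu [mu0 mu1 bmu]]] := (hcov b).1 (conv_sub hsV convb).
have [sub|/fsubsetPn [t0 t0s t0ns]] := boolP (sigma `<=` s).
  by apply: (hface s sigma sT sub); rewrite hk.
pose c := fun t => extf sigma beta t - extf s mu t.
pose U := sigma `|` s.
have depU : dep D U c := conv_dep sumbeta mu1 bmu.
pose ts := sort <=%R (U : seq R).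
have srt : sorted <%R ts by rewrite sort_lt_sorted fset_uniq.
have dts : dep D ts c.
  by move=> j jD; rewrite (perm_big _ (permEl (perm_sort _ _))); apply: depU.
have hts : has (fun t => c t != 0) ts.
  apply/hasP; exists t0; first by rewrite mem_sort in_fsetU t0s.
  rewrite /c /extf t0s (negbTE t0ns) subr0 /beta invr_eq0 pnatr_eq0 //.
have [e [xs [subx sx altx]]] := main_alt srt dts hts.
have srtx : sorted <%R xs := subseq_sorted lt_trans subx srt.
have ux : uniq xs := sorted_uniq lt_trans ltxx srtx.
have [d [dd hd]] := kern ux sx.
have [e2 [ys [suby sy alty]]] := main_alt srtx dd hd.
have yx : ys = xs.
  by apply/eqP; rewrite -(size_subseq_leqif suby).2 sy sx.
subst ys.
have hprod := alt_prod altx alty.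
pose d2 := fun t => if e == e2 then d t else - d t.
have pos : forall x, x \in xs -> 0 < c x * d2 x.
  move=> x xx; have := hprod x xx; rewrite /d2; case: (e == e2) => // H.
  by rewrite mulrN oppr_gt0.
have dd2 : dep D xs d2.
  move=> j jD; rewrite /d2; case: (e == e2); first exact: dd.
  by under eq_bigr do rewrite mulNr; rewrite sumrN dd // oppr0.
have cnz : forall x, x \in xs -> c x != 0 := fun x => alt_nz altx.
have d2pos : forall x, x \in xs -> 0 < c x -> 0 < d2 x.
  by move=> x xx cx; have := pos x xx; rewrite pmulr_rgt0.
have d2neg : forall x, x \in xs -> c x < 0 -> d2 x < 0.
  by move=> x xx cx; have := pos x xx; rewrite nmulr_rgt0.
pose Ps := [seq x <- xs | 0 < c x].
pose Ns := [seq x <- xs | c x < 0].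
have uP : uniq Ps := filter_uniq _ ux.
have uN : uniq Ns := filter_uniq _ ux.
pose P := seq_fset tt Ps.
pose N := seq_fset tt Ns.
pose S := \sum_(t <- Ps) d2 t.
have := alt_has altx; rewrite sx => /(_ isT) [hasPos hasNeg].
have S0 : 0 < S.
  have S0' : 0 <= S.
    rewrite /S big_seq; apply: sumr_ge0 => t; rewrite mem_filter => /andP[ct tx].
    exact/ltW/d2pos.
  have S1 : S != 0.
    rewrite /S big_seq_cond psumr_neq0.
      move: hasPos => /hasP[y yx cy]; apply/hasP; exists y.
        by rewrite mem_filter cy.
      by rewrite mem_filter cy yx /= d2pos.
    by move=> t /andP[]; rewrite mem_filter => /andP[ct tx] _; exact/ltW/d2pos.
  by rewrite lt_def S1 S0'.
have sumN : \sum_(t <- Ns) d2 t = - S.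
  have := dd2 0%N isT; rewrite (split_sum _ cnz).
  under eq_bigr do rewrite expr0 mulr1.
  under [X in (_ + X)%R = _]eq_bigr do rewrite expr0 mulr1.
  by rewrite addrC => /eqP; rewrite addr_eq0 => /eqP.
pose x := \sum_(t <- P) (d2 t / S) *: moment R D t.
have convP : conv R D P x.
  exists (fun t => d2 t / S); split => //.
    move=> t; rewrite seq_fsetE mem_filter => /andP[ct tx].
    by apply: divr_ge0; [exact/ltW/d2pos | exact/ltW].
  by rewrite sum_seq_fset // -mulr_suml divff // gt_eqF.
have xN : x = \sum_(t <- N) (- d2 t / S) *: moment R D t.
  apply/rowP => i; rewrite !momE !sum_seq_fset //.
  have := dd2 i.+1 (ltn_ord i); rewrite (split_sum _ cnz) => H.
  have eL : \sum_(t <- Ps) (d2 t / S * t ^+ i.+1) = (\sum_(t <- Ps) d2 t * t ^+ i.+1) / S.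
    by rewrite mulr_suml; apply: eq_bigr => t _; rewrite mulrAC.
  have eR : \sum_(t <- Ns) (- d2 t / S * t ^+ i.+1) = - (\sum_(t <- Ns) d2 t * t ^+ i.+1) / S.
    by rewrite mulNr mulr_suml -sumrN; apply: eq_bigr => t _; rewrite mulrAC !mulNr.
  rewrite eL eR; congr (_ / S); apply/eqP; rewrite -addr_eq0 H //.
have convN : conv R D N x.
  exists (fun t => - d2 t / S); split => //.
    move=> t; rewrite seq_fsetE mem_filter => /andP[ct tx].
    by apply: divr_ge0; [rewrite oppr_ge0; exact/ltW/d2neg | exact/ltW].
  by rewrite sum_seq_fset // -mulr_suml sumrN sumN opprK divff // gt_eqF.
have PsV : P `<=` sigma.
  apply/fsubsetP => t; rewrite seq_fsetE mem_filter => /andP[ct _].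
  case tsig: (t \in sigma) => //; exfalso; move: ct.
  rewrite /c /extf tsig; case: ifP => h; last by rewrite subrr ltxx.
  by have := mu0 t h; lra.
have NsS : N `<=` s.
  apply/fsubsetP => t; rewrite seq_fsetE mem_filter => /andP[ct _].
  case tsig: (t \in s) => //; exfalso; move: ct.
  rewrite /c /extf tsig subr0; case: ifP => h; last by rewrite ltxx.
  by rewrite /beta ltNge invr_ge0 ler0n.
have cardP : (#|` P| <= (uphalf D).+1)%N.
  rewrite size_seq_fset undup_id // size_filter.
  have H := alt_count altx; rewrite sx in H; apply: leq_trans H _.
  case: (e) => //=; rewrite ltnS uphalf_half; exact: leq_addl.
have P0 : (0 < #|` P|)%N.
  by rewrite size_seq_fset undup_id // size_filter -has_count.
have PT : P \in T := hskel P PsV P0 cardP.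
have [u [uPP us hu]] := hint P s PT sT.
have [lam [lam0 lam1 xlam]] := (hu x).1 (conj convP (conv_sub NsS convN)).
pose W := u `|` N.
have Ws : W `<=` s by rewrite fsubUset us NsS.
have sumN' : \sum_(t <- N) (- d2 t / S) = 1.
  by rewrite sum_seq_fset // -mulr_suml sumrN sumN opprK divff // gt_eqF.
have dW := conv_dep lam1 sumN' (etrans (esym xlam) xN).
have := indep (fset_uniq W) (leq_trans (fsubset_leq_card Ws) (andP (hcard s sT)).2) dW.
move=> Hz.
case: (boolP (has (fun t => lam t != 0) u)) => [/hasP[t tu lt] | /hasPn H]; last first.
  exfalso; move: lam1; rewrite big1_seq; first by move/eqP; rewrite eq_sym oner_eq0.
  by move=> t /andP[_ tu]; apply/eqP; rewrite -[_ == 0]negbK H.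
have tN : t \notin N.
  rewrite seq_fsetE mem_filter; apply/negP => /andP[ct _].
  have := (fsubsetP uPP) t tu; rewrite seq_fsetE mem_filter => /andP[ct' _].
  by move: ct ct'; lra.
exfalso; move: lt; have := Hz t; rewrite in_fsetU tu /= => /(_ isT).
by rewrite /extf tu (negbTE tN) subr0 => ->; rewrite eqxx.
Qed.
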